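(* Let $n\ge1$, $D\ge1$, and let $X_n=\{\mathbf{x}^0,\ldots,\mathbf{x}^{n-1}\}\subseteq\{0,1\}^D$ consist of $n$ pairwise distinct vectors, indexed so that $\mathbf{a}\cdot\mathbf{x}^0<\cdots<\mathbf{a}\cdot\mathbf{x}^{n-1}$ for some $\mathbf{a}\in\mathbb{Z}^D$. Then there is a seven-layer Boolean threshold network with $D$ input nodes and $D$ output nodes that is a perfect autoencoder for $X_n$, in which the designated middle hidden layer has $2\lceil\log_2\sqrt n\rceil$ nodes and the other hidden layers together have $(D+5)\lceil\sqrt n\rceil+D$ nodes.
   Context: A Boolean threshold function is a map $\{0,1\}^h\to\{0,1\}$, $\mathbf{u}\mapsto[\mathbf{w}\cdot\mathbf{u}\ge\theta]$ (value $1$ iff $\mathbf{w}\cdot\mathbf{u}\ge\theta$) with $\mathbf{w}\in\mathbb{Z}^h,\theta\in\mathbb{Z}$. An $L$-layer Boolean threshold network has layers $1,\ldots,L$; layer $1$ is the input; each node of layer $t+1$ computes a Boolean threshold function of the values of layer $t$; layers $2,\ldots,L-1$ are hidden. If layer $k$ is designated the middle layer, the encoder $\mathbf{f}$ is the map from layer $1$ values to layer $k$ values and the decoder $\mathbf{g}$ the map from layer $k$ values to layer $L$ values; the network is a perfect autoencoder for $X_n$ if $\mathbf{g}(\mathbf{f}(\mathbf{x}^i))=\mathbf{x}^i$ for all $i$. *)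

(* Defs.v *)
From mathcomp Require Import all_boot all_order all_algebra.
Set Implicit Arguments. Unset Strict Implicit. Unset Printing Implicit Defensive.
Import Order.TTheory GRing.Theory Num.Theory.

(* A node of a Boolean threshold network: weight vector w (integers) and
   threshold theta (integer). *)
Definition node := (seq int * int)%type.
Definition layer := seq node.

Definition node_out (u : seq bool) (nd : node) : bool :=
  (nd.2 <= \sum_(j < size u) nth 0%R nd.1 j * ((nth false u j : nat)%:Z))%R.

Definition layer_out (L : layer) (u : seq bool) : seq bool :=
  map (node_out u) L.

Definition run_layers (Ls : seq layer) (u : seq bool) : seq bool :=
  foldl (fun v L => layer_out L v) u Ls.

(* A network with d input nodes is given by the list Ls of its non-input
   layers (layer 1 = input, layer t+2 = Ls`_t).  Width of layer t+1
   (0-based index t): *)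
Definition width (d : nat) (Ls : seq layer) (t : nat) : nat :=
  if t is t'.+1 then size (nth [::] Ls t') else d.

Definition wf_net (d : nat) (Ls : seq layer) : Prop :=
  forall t, t < size Ls ->
    all (fun nd : node => size nd.1 == width d Ls t) (nth [::] Ls t).

(* ceil(log2 (sqrt n)) = least m with sqrt n <= 2^m, i.e. n <= (2^m)^2. *)
Lemma ex_ceil_log2_sqrt (n : nat) : exists m, n <= (2 ^ m) ^ 2.
Proof.
exists n; apply: (leq_trans (ltnW (ltn_expl n (ltnSn 1)))).
by case: (2 ^ n) => [|k] //; rewrite expnS expn1 leq_pmulr.
Qed.
Definition ceil_log2_sqrt (n : nat) : nat := ex_minn (ex_ceil_log2_sqrt n).

Lemma ex_ceil_sqrt (n : nat) : exists m, n <= m ^ 2.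
Proof. by exists n; case: n => [|k] //; rewrite expnS expn1 leq_pmulr. Qed.
Definition ceil_sqrt (n : nat) : nat := ex_minn (ex_ceil_sqrt n).

Definition dotZ (D : nat) (a : 'I_D -> int) (x : D.-tuple bool) : int :=
  (\sum_(j < D) a j * ((tnth x j : nat)%:Z))%R.

(* Main.v *)
Require Import Defs.
From mathcomp Require Import all_boot all_order all_algebra.
From mathcomp Require Import zify.
Import Order.TTheory GRing.Theory Num.Theory.

Lemma bits_sum q c : \sum_(0 <= b < c) 2 ^ b * odd (q %/ 2 ^ b) = q %% 2 ^ c.
Proof.
elim: c q => [|c IH] q; first by rewrite big_nil expn0 modn1.
rewrite big_nat_recl // expn0 divn1 mul1n.
rewrite (eq_big_nat _ _ (F2 := fun b => 2 * (2 ^ b * odd (q %/ 2 %/ 2 ^ b)))); last first.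
  by move=> j _; rewrite expnS -divnMA mulnA.
rewrite -big_distrr /= IH expnS.
set y := q %/ 2.
have hq : q = odd q + 2 * (y %% 2 ^ c) + y %/ 2 ^ c * (2 * 2 ^ c).
  have e := divn_eq y (2 ^ c).
  have e2 := odd_double_half q; rewrite -/y -muln2 in e2.
  lia.
have -> : q %% (2 * 2 ^ c) = (odd q + 2 * (y %% 2 ^ c)) %% (2 * 2 ^ c).
  by rewrite {1}hq addnC modnMDl.
rewrite [RHS]modn_small //.
have : y %% 2 ^ c < 2 ^ c by rewrite ltn_mod expn_gt0.
case: (odd q) => /=; set z := 2 ^ c; lia.
Qed.

Local Open Scope ring_scope.

Definition dot (w : seq int) (u : seq bool) : int :=
  \sum_(0 <= j < size u) nth 0 w j * ((nth false u j : nat)%:Z).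

Lemma node_outE u nd : node_out u nd = (nd.2 <= dot nd.1 u).
Proof. by rewrite /node_out /dot big_mkord. Qed.

Lemma dot_cat w1 w2 u1 u2 : size w1 = size u1 ->
  dot (w1 ++ w2) (u1 ++ u2) = dot w1 u1 + dot w2 u2.
Proof.
move=> hs; rewrite /dot size_cat (@big_cat_nat _ _ _ (size u1) 0 _ _ _ (leq0n _) (leq_addr _ _)) /=.
congr (_ + _).
  apply: eq_big_nat => j /andP [_ hj]; by rewrite !nth_cat hs hj.
rewrite -[X in \big[_/_]_(X <= _ < _) _](add0n (size u1)) big_addn addKn.
apply: eq_big_nat => j _.
rewrite !nth_cat hs ltnNge leq_addl /= addnK //.
Qed.

Lemma dot_nseq0 k u : dot (nseq k 0) u = 0.
Proof. by rewrite /dot big1 // => j _; rewrite nth_nseq if_same mul0r. Qed.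

Lemma dot_mkseq (f : nat -> int) g k :
  dot (mkseq f k) (mkseq g k) = \sum_(0 <= j < k) f j * ((g j : nat)%:Z).
Proof.
rewrite /dot size_mkseq; apply: eq_big_nat => j /andP [_ hj].
by rewrite !nth_mkseq.
Qed.

Definition lin (h : nat -> int) K := mkseq (fun k => h k.+1 - h k) K.
Definition unary (q K : nat) := mkseq (fun k => (k < q)%N) K.

Lemma dot_lin h K q : (q <= K)%N -> dot (lin h K) (unary q K) = h q - h 0%N.
Proof.
move=> hq; rewrite dot_mkseq (@big_cat_nat _ _ _ q 0 _ _ _ (leq0n _) hq) /=.
rewrite [X in _ + X]big1_seq ?addr0; last first.
  by move=> j /andP [_]; rewrite mem_index_iota => /andP [hj _]; rewrite ltnNge hj mulr0.
rewrite -telescope_sumr //; apply: eq_big_nat => j /andP [_ hj].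
by rewrite hj mulr1.
Qed.

Definition unitw W k : seq int := mkseq (fun p => ((p == k) : nat)%:Z) W.

Lemma dot_unit u k : (k < size u)%N -> dot (unitw (size u) k) u = (nth false u k : nat)%:Z.
Proof.
move=> hk; rewrite /dot.
rewrite (eq_big_nat _ _ (F2 := fun j => if j == k then (nth false u j : nat)%:Z else 0)).
  by rewrite -big_mkcond big_nat1_eq /= hk.
move=> j /andP [_ hj]; rewrite nth_mkseq //.
by case: (j == k); rewrite ?mul1r ?mul0r.
Qed.

Definition pow2w c : seq int := mkseq (fun b => (2 ^ b)%:Z) c.
Definition bits (q c : nat) := mkseq (fun b => odd (q %/ 2 ^ b)) c.


Lemma eq_mkseq_in T (f g : nat -> T) k : (forall j, (j < k)%N -> f j = g j) -> mkseq f k = mkseq g k.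
Proof. move=> h; rewrite /mkseq; apply/eq_in_map => j; rewrite mem_iota add0n => /andP [_]; exact: h. Qed.

Lemma layer_out_mkseq f k u : layer_out (mkseq f k) u = mkseq (fun j => node_out u (f j)) k.
Proof. by rewrite /layer_out /mkseq -map_comp. Qed.

Lemma layer_out_cat L1 L2 u : layer_out (L1 ++ L2) u = layer_out L1 u ++ layer_out L2 u.
Proof. by rewrite /layer_out map_cat. Qed.

Lemma le1b (b : bool) : (1 <= (b : nat)%:Z) = b.
Proof. by case: b. Qed.

Lemma copy_layer u1 u2 : layer_out (mkseq (fun k => (unitw (size u1 + size u2) k, 1)) (size u1)) (u1 ++ u2) = u1.
Proof.
rewrite layer_out_mkseq -[RHS](mkseq_nth false u1); apply: eq_mkseq_in => j hj.
rewrite node_outE /= -size_cat dot_unit ?size_cat ?ltn_addr // le1b nth_cat hj //.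
Qed.

Definition L0 s D wa (A : nat -> int) : layer :=
  mkseq (fun k => (wa, A (k.+1 * s)%N)) (s-1) ++ mkseq (fun j => (unitw D j, 1)) D.

Lemma lay0 s D wa A (xi : seq bool) ii : (0 < s)%N -> size xi = D ->
  (forall m, (A m <= dot wa xi) = (m <= ii)%N) ->
  layer_out (L0 s D wa A) xi = unary (ii %/ s) (s-1) ++ xi.
Proof.
move=> s0 hx hA; rewrite layer_out_cat; congr (_ ++ _).
  rewrite layer_out_mkseq; apply: eq_mkseq_in => k hk.
  by rewrite node_outE /= hA leq_divRL.
have := copy_layer xi [::]; rewrite cats0 addn0 hx; exact.
Qed.

Definition L1 s D wa (A : nat -> int) : layer :=
  mkseq (fun j => (lin (fun k => - A (k * s + j.+1)%N) (s-1) ++ wa, A j.+1)) (s-1)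
  ++ mkseq (fun k => (unitw (s-1+D) k, 1)) (s-1).

Lemma lay1 s D wa A (xi : seq bool) ii q r : size xi = D -> size wa = D ->
  (forall m, (A m <= dot wa xi) = (m <= ii)%N) -> (q <= s-1)%N -> ii = (q * s + r)%N ->
  layer_out (L1 s D wa A) (unary q (s-1) ++ xi) = unary r (s-1) ++ unary q (s-1).
Proof.
move=> hx hw hA hq hi; rewrite layer_out_cat; congr (_ ++ _).
  rewrite layer_out_mkseq; apply: eq_mkseq_in => j hj.
  rewrite node_outE /= dot_cat; last by rewrite /lin !size_mkseq.
  rewrite dot_lin // mul0n add0n.
  have -> : (A j.+1 <= - A (q * s + j.+1)%N - - A j.+1 + dot wa xi) = (A (q * s + j.+1)%N <= dot wa xi).
    by apply/idP/idP; lia.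
  rewrite hA hi; lia.
have := copy_layer (unary q (s-1)) xi.
by rewrite /unary size_mkseq hx.
Qed.

Definition bitf b k : int := (odd (k %/ 2 ^ b)%N : nat)%:Z.

Definition L2 s c : layer :=
  mkseq (fun b => (nseq (s-1) 0 ++ lin (bitf b) (s-1), 1)) c
  ++ mkseq (fun b => (lin (bitf b) (s-1) ++ nseq (s-1) 0, 1)) c.

Lemma lay2 s c q r : (q <= s-1)%N -> (r <= s-1)%N ->
  layer_out (L2 s c) (unary r (s-1) ++ unary q (s-1)) = bits q c ++ bits r c.
Proof.
move=> hq hr; rewrite layer_out_cat; congr (_ ++ _).
  rewrite layer_out_mkseq; apply: eq_mkseq_in => b hb.
  rewrite node_outE /= dot_cat ?size_nseq ?size_mkseq //.
  by rewrite dot_nseq0 dot_lin // add0r /bitf div0n subr0 le1b.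
rewrite layer_out_mkseq; apply: eq_mkseq_in => b hb.
rewrite node_outE /= dot_cat ?size_nseq ?size_mkseq //.
by rewrite dot_nseq0 dot_lin // addr0 /bitf div0n subr0 le1b.
Qed.

Lemma dot_pow2 q c : (q < 2 ^ c)%N -> dot (pow2w c) (bits q c) = q%:Z.
Proof.
move=> hq; rewrite dot_mkseq.
rewrite (eq_big_nat _ _ (F2 := fun b => ((2 ^ b * odd (q %/ 2 ^ b))%N)%:Z)); last by [].
rewrite -(big_morph (fun n : nat => n%:Z) PoszD (erefl 0%:Z)).
by rewrite bits_sum modn_small.
Qed.

Definition L3 s c : layer :=
  mkseq (fun k => (pow2w c ++ nseq c 0, (k.+1)%:Z)) (s-1)
  ++ mkseq (fun k => (nseq c 0 ++ pow2w c, (k.+1)%:Z)) (s-1)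
  ++ nseq 5 (nseq (c + c) 0, 0).

Lemma lay3 s c q r : (q < 2 ^ c)%N -> (r < 2 ^ c)%N ->
  layer_out (L3 s c) (bits q c ++ bits r c) = unary q (s-1) ++ unary r (s-1) ++ nseq 5 true.
Proof.
move=> hq hr; rewrite !layer_out_cat; congr (_ ++ _ ++ _).
- rewrite layer_out_mkseq; apply: eq_mkseq_in => k hk.
  rewrite node_outE /= dot_cat ?size_nseq ?size_mkseq //.
  by rewrite dot_nseq0 addr0 dot_pow2 // lez_nat.
- rewrite layer_out_mkseq; apply: eq_mkseq_in => k hk.
  rewrite node_outE /= dot_cat ?size_nseq ?size_mkseq //.
  by rewrite dot_nseq0 add0r dot_pow2 // lez_nat.
- by rewrite /layer_out map_nseq node_outE /= dot_nseq0.
Qed.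

Definition L4 s D (G : nat -> nat -> nat -> bool) : layer :=
  mkseq (fun p => (lin (fun q => (G (p %/ s)%N ((p %% s)%N)%N q : nat)%:Z) (s-1)
                   ++ lin (fun r => ((r == (p %% s)%N) : nat)%:Z) (s-1) ++ nseq 5 0,
                   2%:Z - (G (p %/ s)%N ((p %% s)%N)%N 0 : nat)%:Z - ((0 == (p %% s)%N) : nat)%:Z)) (D * s)%N.

Lemma lay4 s D G q r : (q <= s-1)%N -> (r <= s-1)%N ->
  layer_out (L4 s D G) (unary q (s-1) ++ unary r (s-1) ++ nseq 5 true)
  = mkseq (fun p => (r == (p %% s)%N) && G (p %/ s)%N ((p %% s)%N)%N q) (D * s)%N.
Proof.
move=> hq hr; rewrite layer_out_mkseq; apply: eq_mkseq_in => p hp.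
rewrite node_outE /= dot_cat ?size_mkseq // dot_cat ?size_mkseq //.
rewrite (dot_nseq0 5 (nseq 5 true)) !dot_lin // addr0.
case: (G _ _ q); case: (G _ _ 0); case: (r == _); case: (0 == _); by [].
Qed.

Definition L5 s D : layer :=
  mkseq (fun d => (mkseq (fun p => ((p %/ s)%N == d : nat)%:Z) (D * s)%N, 1)) D.

Lemma lay5 s D (G : nat -> nat -> nat -> bool) q r : (r < s)%N ->
  layer_out (L5 s D) (mkseq (fun p => (r == (p %% s)%N) && G (p %/ s)%N ((p %% s)%N)%N q) (D * s)%N)
  = mkseq (fun d => G d r q) D.
Proof.
move=> hr; rewrite layer_out_mkseq; apply: eq_mkseq_in => d hd.
rewrite node_outE /= dot_mkseq.
rewrite (eq_big_nat _ _ (F2 := fun p => if p == (d * s + r)%N then ((G d r q) : nat)%:Z else 0)).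
  rewrite -big_mkcond big_nat1_eq /=.
  have -> : (d * s + r < D * s)%N.
    have : (d.+1 * s <= D * s)%N by rewrite leq_mul2r hd orbT.
    rewrite mulSn; lia.
  by rewrite le1b.
move=> p _.
have s0 : (0 < s)%N by apply: leq_ltn_trans hr.
case: (eqVneq p (d * s + r)%N) => [->|hne].
  rewrite divnMDl // (divn_small hr) addn0 eqxx modnMDl (modn_small hr) eqxx /=.
  by case: (G d r q).
case: eqP => [hd'|]; last by rewrite mul0r.
case: eqP => [hr'|]; last by rewrite andFb mulr0.
by exfalso; move/eqP: hne; apply; rewrite {1}(divn_eq p s) hd' hr'.
Qed.

Lemma all_mkseq T (P : pred T) f k : (forall j, P (f j)) -> all P (mkseq f k).
Proof. by move=> h; rewrite /mkseq all_map; apply/allP => j _; exact: h. Qed.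

Local Close Scope ring_scope.
Ltac szs := try rewrite /lin; rewrite ?size_cat ?size_map ?size_iota ?size_nseq ?size_mkseq /=; apply/eqP; lia.
Theorem theorem22 (n D : nat) (x : 'I_n -> D.-tuple bool) :
  1 <= n -> 1 <= D ->
  injective x ->
  (exists a : 'I_D -> int, forall i j : 'I_n, i < j ->
      (dotZ a (x i) < dotZ a (x j))%R) ->
  exists (Ls : seq layer) (m : nat),
    size Ls = 6 /\ wf_net D Ls /\ size (nth [::] Ls 5) = D /\
    1 <= m <= 5 /\
    size (nth [::] Ls m.-1) = 2 * ceil_log2_sqrt n /\
    \sum_(t < 5 | t != m.-1 :> nat) size (nth [::] Ls t)
       = (D + 5) * ceil_sqrt n + D /\
    (forall i : 'I_n,
          run_layers (drop m Ls) (run_layers (take m Ls) (x i)) = x i).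
Proof.
case: n x => [|n'] x // _; case: D x => [|D'] x // _ _ [a ha].
set n := n'.+1; set D := D'.+1.
set s := ceil_sqrt n; set c := ceil_log2_sqrt n.
have hs : (n <= s ^ 2)%N by rewrite /s /ceil_sqrt; case: ex_minnP.
have hc : (n <= (2 ^ c) ^ 2)%N by rewrite /c /ceil_log2_sqrt; case: ex_minnP.
have s2c : (s <= 2 ^ c)%N by rewrite /s /ceil_sqrt; case: ex_minnP => m _ /(_ _ hc).
have s0 : (0 < s)%N by case: (s) hs => //.
pose xs m : seq bool := x (inord m).
pose A m : int := if (m < n)%N then dotZ a (x (inord m)) else (dotZ a (x (inord n')) + 1)%R.
pose wa : seq int := mkseq (fun j => a (inord j)) D.
pose G d j q : bool := nth false (xs (q * s + j)%N) d.
exists [:: L0 s D wa A; L1 s D wa A; L2 s c; L3 s c; L4 s D G; L5 s D], 3%N.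
have hle : forall j k : 'I_n, (j <= k)%N -> (dotZ a (x j) <= dotZ a (x k))%R.
  move=> j k; rewrite leq_eqVlt => /orP [/eqP/val_inj -> //|/ha/ltW //].
have hcmp : forall j k : 'I_n, (dotZ a (x j) <= dotZ a (x k))%R = (j <= k)%N.
  move=> j k; case: (leqP j k) => h; first exact: hle.
  exact: lt_geF (ha _ _ h).
have hdot : forall i : 'I_n, dot wa (x i) = dotZ a (x i).
  move=> i; rewrite /dot size_tuple /dotZ big_mkord; apply: eq_bigr => j _.
  by rewrite /wa nth_mkseq // inord_val (tnth_nth false).
have hA : forall (i : 'I_n) m, (A m <= dot wa (x i))%R = (m <= i)%N.
  move=> i m; rewrite hdot /A; case: ltnP => hm.
    by rewrite hcmp inordK.
  have -> : (m <= i)%N = false by apply/negbTE; rewrite -ltnNge; exact: leq_trans (ltn_ord i) hm.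
  apply: lt_geF; apply: (le_lt_trans (hle i (inord n') _)); first by rewrite inordK //; case: i.
  by rewrite ltrDl.
have hwa : size wa = D by rewrite size_mkseq.
have sz0 : size (L0 s D wa A) = (s - 1 + D)%N by rewrite size_cat !size_mkseq.
have sz1 : size (L1 s D wa A) = (s - 1 + (s - 1))%N by rewrite size_cat !size_mkseq.
have sz2 : size (L2 s c) = (c + c)%N by rewrite size_cat !size_mkseq.
have sz3 : size (L3 s c) = (s - 1 + (s - 1 + 5))%N by rewrite !size_cat !size_mkseq size_nseq.
have sz4 : size (L4 s D G) = (D * s)%N by rewrite size_mkseq.
have sz5 : size (L5 s D) = D by rewrite size_mkseq.
split; first by [].
split.
  move=> t; case: t => [|[|[|[|[|[|t]]]]]] // _; cbn [width nth].
  - rewrite all_cat; apply/andP; split; apply: all_mkseq => j /=; szs.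
  - rewrite sz0 all_cat; apply/andP; split; apply: all_mkseq => j /=; szs.
  - rewrite sz1 all_cat; apply/andP; split; apply: all_mkseq => j /=; szs.
  - rewrite sz2 !all_cat; apply/and3P; split; try (apply: all_mkseq => j /=; szs).
    by rewrite /= !size_nseq eqxx.
  - rewrite sz3; apply: all_mkseq => j /=; szs.
  - rewrite sz4; apply: all_mkseq => j /=; szs.
split; first by [].
split; first by [].
split; first by rewrite /= sz2 mul2n addnn.
split.
  rewrite big_mkcond /= !big_ord_recr big_ord0 /= sz0 sz1 sz3 sz4.
  lia.
move=> i /=.
have hi := divn_eq i s.
have hq : (i %/ s < s)%N by rewrite ltn_divLR // mulnn; exact: leq_trans (ltn_ord i) hs.
have hr : (i %% s < s)%N by rewrite ltn_mod.
change (layer_out (L5 s D) (layer_out (L4 s D G) (layer_out (L3 s c) (layer_out (L2 s c) (layer_out (L1 s D wa A) (layer_out (L0 s D wa A) (x i)))))) = x i).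
rewrite (@lay0 s D wa A (x i) i s0 (size_tuple _) (hA i)).
rewrite (@lay1 s D wa A (x i) i _ _ (size_tuple _) hwa (hA i) _ hi); last by lia.
rewrite lay2; [| lia | lia].
rewrite lay3; [| lia | lia].
rewrite lay4; [| lia | lia].
rewrite lay5 //.
rewrite /G -hi /xs inord_val.
by rewrite -[RHS](mkseq_nth false) size_tuple.
Qed.
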